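(* Let $\mathcal{K}\subseteq\mathbb{R}\cup\{\pm\infty\}$ have nonzero Lebesgue measure, let $\varpi:\mathcal{K}\to\mathbb{R}_{\geq 0}$ be Lebesgue integrable with only countably many zeros, let $d,n,\rho\in\mathbb{N}$, let $\mathbf{f}\in\mathbb{L}^2_{\varpi}(\mathcal{K};\mathbb{R}^d)$ satisfy $\int_{\mathcal{K}}\varpi(\tau)\mathbf{f}(\tau)\mathbf{f}^\top(\tau)\,d\tau\succ 0$, put $F(\tau)=\mathbf{f}(\tau)\otimes I_n$, and let $U\in\mathbb{R}^{n\times n}$ be symmetric with $U\succeq 0$. Suppose there exist a symmetric $Y\in\mathbb{R}^{\rho dn\times\rho dn}$ and $X=[X_1\ \cdots\ X_d]\in\mathbb{R}^{n\times\rho dn}$ with $X_i\in\mathbb{R}^{n\times\rho n}$ such that $$\begin{bmatrix}U & -X\\ -X^\top & Y\end{bmatrix}\succeq 0 .$$ Put $\widehat{X}=\mathrm{Col}_{i=1}^d X_i\in\mathbb{R}^{dn\times\rho n}$ and $W=\int_{\mathcal{K}}\varpi(\tau)(\mathbf{f}^\top(\tau)\otimes I_{\rho n})Y(\mathbf{f}(\tau)\otimes I_{\rho n})\,d\tau$. Then $$\int_{\mathcal{K}}\varpi(\tau)\mathbf{x}^\top(\tau)U\mathbf{x}(\tau)\,d\tau\geq 2\boldsymbol{\vartheta}^\top\widehat{X}\mathbf{z}-\mathbf{z}^\top W\mathbf{z}$$ for all $\mathbf{z}\in\mathbb{R}^{\rho n}$ and $\mathbf{x}\in\mathbb{L}^2_{\varpi}(\mathcal{K};\mathbb{R}^n)$,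 where $\boldsymbol{\vartheta}=\int_{\mathcal{K}}\varpi(\tau)F(\tau)\mathbf{x}(\tau)\,d\tau$. Furthermore, if $\Upsilon\in\mathbb{R}^{dn\times\rho n}$ and $\mathbf{z}\in\mathbb{R}^{\rho n}$ satisfy $\Upsilon\mathbf{z}=\int_{\mathcal{K}}\varpi(\tau)F(\tau)\mathbf{x}(\tau)\,d\tau$, then $$\int_{\mathcal{K}}\varpi(\tau)\mathbf{x}^\top(\tau)U\mathbf{x}(\tau)\,d\tau\geq\mathbf{z}^\top\big[\Upsilon^\top\widehat{X}+\widehat{X}^\top\Upsilon-W\big]\mathbf{z}.$$
   Context: $\mathbb{L}^2_{\varpi}(\mathcal{K};\mathbb{R}^m)$ is the set of Lebesgue integrable functions $\phi:\mathcal{K}\to\mathbb{R}^m$ with $\int_{\mathcal{K}}\varpi\phi^\top\phi\,d\tau<\infty$. $\mathrm{Col}_{i=1}^d X_i$ is the vertical stack of the blocks $X_i$; $\otimes$ is the Kronecker product. *)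

(* Defs.v *)
From HB Require Import structures.
From mathcomp Require Import all_boot all_order all_algebra.
From mathcomp Require Import all_classical all_reals all_analysis.
From mathcomp Require Import mxtens.

Set Implicit Arguments.
Unset Strict Implicit.
Unset Printing Implicit Defensive.

Import Order.TTheory GRing.Theory Num.Theory.
Import numFieldNormedType.Exports.
Local Open Scope classical_set_scope.
Local Open Scope ring_scope.

Section Defs.
Variable R : realType.
Local Notation mu := (@lebesgue_measure R).

Definition psd {m} (A : 'M[R]_m) : Prop :=
  A^T = A /\ forall v : 'cV[R]_m, 0 <= (v^T *m A *m v) 0 0.

Definition pd {m} (A : 'M[R]_m) : Prop :=
  A^T = A /\ forall v : 'cV[R]_m, v != 0 -> 0 < (v^T *m A *m v) 0 0.

Definition L2w (K : set R) (w : R -> R) {m} (phi : R -> 'cV[R]_m) : Prop :=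
  (forall i, measurable_fun K (fun t => phi t i ord0)) /\
  (\int[mu]_(t in K) ((w t * ((phi t)^T *m phi t) 0 0)%:E) < +oo)%E.

Definition mxint (K : set R) (w : R -> R) {p q} (M : R -> 'M[R]_(p, q))
  : 'M[R]_(p, q) :=
  \matrix_(i, j) Rintegral mu K (fun t => w t * M t i j).

Definition kronI {m} (v : 'cV[R]_m) (k : nat) : 'M[R]_(m * k, k) :=
  castmx (erefl, mul1n k) (v *t (1%:M : 'M[R]_k)).

(* i-th block X_i (n x q) of X = [X_1 ... X_d] (n x d*q) *)
Definition Xblk {n d q} (X : 'M[R]_(n, d * q)) (i : 'I_d) : 'M[R]_(n, q) :=
  \matrix_(a, b) X a (mxtens_index (i, b)).

Definition Xhat {n d q} (X : 'M[R]_(n, d * q)) : 'M[R]_(d * n, q) :=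
  \matrix_(k, b) Xblk X (mxtens_unindex k).1 (mxtens_unindex k).2 b.

End Defs.

(* Main.v *)
Require Import Defs.
From HB Require Import structures.
From mathcomp Require Import all_boot all_order all_algebra.
From mathcomp Require Import all_classical all_reals all_analysis.
From mathcomp Require Import mxtens measurable_realfun.
From mathcomp Require Import ring lra.

Import Order.TTheory GRing.Theory Num.Theory.
Import numFieldNormedType.Exports.
Local Open Scope classical_set_scope.
Local Open Scope ring_scope.

Definition G (R : realType) (K : set R) (w : R -> R) (g : R -> R) : Prop :=
  @measurable_fun _ _ (measurableTypeR R) R K g /\
  (@lebesgue_measure R).-integrable K (fun t => (w t * g t ^+ 2)%:E).
Arguments G {R}.

Lemma intD (R : realType) (K : set R) (f1 f2 : R -> R) :
  @measurable _ (measurableTypeR R) K ->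
  (@lebesgue_measure R).-integrable K (fun t => (f1 t)%:E) ->
  (@lebesgue_measure R).-integrable K (fun t => (f2 t)%:E) ->
  (@lebesgue_measure R).-integrable K (fun t => (f1 t + f2 t)%:E).
Proof.
move=> mK i1 i2; have := integrableD mK i1 i2.
by apply: eq_integrable => // t _ /=; rewrite EFinD.
Qed.

Lemma intZ (R : realType) (K : set R) (c : R) (f : R -> R) :
  @measurable _ (measurableTypeR R) K ->
  (@lebesgue_measure R).-integrable K (fun t => (f t)%:E) ->
  (@lebesgue_measure R).-integrable K (fun t => (c * f t)%:E).
Proof.
move=> mK i1; have := integrableZl mK c i1.
by apply: eq_integrable => // t _ /=; rewrite EFinM.
Qed.

Lemma int_sum (R : realType) (K : set R) (I : Type) (s : seq I) (F : I -> R -> R) :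
  @measurable _ (measurableTypeR R) K ->
  (forall i, (@lebesgue_measure R).-integrable K (fun t => (F i t)%:E)) ->
  (@lebesgue_measure R).-integrable K (fun t => (\sum_(i <- s) F i t)%:E).
Proof.
move=> mK hF; elim: s => [|i s IH].
  have -> : (fun t => (\sum_(i <- [::]) F i t)%:E) = cst 0%E.
    by apply/funext => t; rewrite big_nil.
  exact: integrable0.
have -> : (fun t => (\sum_(j <- i :: s) F j t)%:E) =
          (fun t => (F i t + \sum_(j <- s) F j t)%:E).
  by apply/funext => t; rewrite big_cons.
exact: intD.
Qed.

Lemma Rint_sum (R : realType) (K : set R) (I : Type) (s : seq I) (F : I -> R -> R) :
  @measurable _ (measurableTypeR R) K ->
  (forall i, (@lebesgue_measure R).-integrable K (fun t => (F i t)%:E)) ->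
  Rintegral (@lebesgue_measure R) K (fun t => \sum_(i <- s) F i t) =
  \sum_(i <- s) Rintegral (@lebesgue_measure R) K (F i).
Proof.
move=> mK hF; elim: s => [|i s IH].
  rewrite big_nil.
  have -> : (fun t => \sum_(i <- [::]) F i t) = (fun _ => 0).
    by apply/funext => t; rewrite big_nil.
  by rewrite Rintegral_cst // mul0r.
rewrite big_cons -IH.
have -> : (fun t => \sum_(j <- i :: s) F j t) =
          (fun t => F i t + \sum_(j <- s) F j t).
  by apply/funext => t; rewrite big_cons.
rewrite RintegralD //; first exact: hF.
exact: int_sum.
Qed.

Section GS.
Context (R : realType) (K : set R) (w : R -> R).
Context (mK : @measurable _ (measurableTypeR R) K) (w0 : forall t, K t -> 0 <= w t)
  (wi : (@lebesgue_measure R).-integrable K (fun t => (w t)%:E)).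

Let mw : @measurable_fun _ _ (measurableTypeR R) R K w.
Proof. by case/integrableP: wi => /measurable_EFinP. Qed.

Lemma Gprod g h : G K w g -> G K w h ->
  (@lebesgue_measure R).-integrable K (fun t => (w t * (g t * h t))%:E).
Proof.
move=> [mg ig] [mh ih].
apply: (@le_integrable _ _ _ _ _ mK _ (fun t => (w t * g t ^+ 2 + w t * h t ^+ 2)%:E)) => //.
- apply/measurable_EFinP; apply: measurable_funM => //; exact: measurable_funM.
- move=> t Kt /=; rewrite lee_fin.
  have wt := w0 t Kt.
  rewrite [X in _ <= X]ger0_norm; last by rewrite addr_ge0 // mulr_ge0 // sqr_ge0.
  rewrite normrM (ger0_norm wt) -mulrDr ler_wpM2l //.
  have [gh0|gh0] := lerP 0 (g t * h t).
    by rewrite ger0_norm //; nra.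
  by rewrite ltr0_norm //; nra.
- exact: intD.
Qed.

Lemma Gadd g h : G K w g -> G K w h -> G K w (fun t => g t + h t).
Proof.
move=> Gg Gh; split; first by apply: measurable_funD; [case: Gg|case: Gh].
have -> : (fun t => (w t * (g t + h t) ^+ 2)%:E) =
  (fun t => (w t * (g t * g t) + (2 * (w t * (g t * h t)) + w t * (h t * h t)))%:E).
  by apply/funext => t; congr EFin; ring.
apply: intD => //; first exact: Gprod.
by apply: intD => //; [apply: intZ => //|]; exact: Gprod.
Qed.

Lemma GZ c g : G K w g -> G K w (fun t => c * g t).
Proof.
move=> [mg ig]; split; first by apply: measurable_funM => //; exact: measurable_cst.
have -> : (fun t => (w t * (c * g t) ^+ 2)%:E) =
  (fun t => (c ^+ 2 * (w t * g t ^+ 2))%:E).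
  by apply/funext => t; congr EFin; ring.
exact: intZ.
Qed.

Lemma G0 : G K w (fun _ => 0).
Proof.
split; first exact: measurable_cst.
have -> : (fun t => (w t * 0 ^+ 2)%:E) = cst 0%E.
  by apply/funext => t; rewrite expr0n /= mulr0.
exact: integrable0.
Qed.

Lemma Gsum (I : Type) (s : seq I) (F : I -> R -> R) :
  (forall i, G K w (F i)) -> G K w (fun t => \sum_(i <- s) F i t).
Proof.
move=> hF; elim: s => [|i s IH].
  have -> : (fun t => \sum_(i <- [::]) F i t) = (fun _ => 0).
    by apply/funext => t; rewrite big_nil.
  exact: G0.
have -> : (fun t => \sum_(j <- i :: s) F j t) =
          (fun t => F i t + \sum_(j <- s) F j t).
  by apply/funext => t; rewrite big_cons.
exact: Gadd.
Qed.

End GS.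
Section GM.
Context (R : realType) (K : set R) (w : R -> R).
Context (mK : @measurable _ (measurableTypeR R) K) (w0 : forall t, K t -> 0 <= w t)
  (wi : (@lebesgue_measure R).-integrable K (fun t => (w t)%:E)).

Lemma Gmulr p q r (A : R -> 'M[R]_(p, q)) (C : 'M[R]_(q, r)) :
  (forall i j, G K w (fun t => A t i j)) ->
  forall i j, G K w (fun t => (A t *m C) i j).
Proof.
move=> hA i j.
have -> : (fun t => (A t *m C) i j) = (fun t => \sum_k C k j * A t i k).
  by apply/funext => t; rewrite mxE; apply: eq_bigr => k _; rewrite mulrC.
by apply: Gsum => // k; apply: GZ => //.
Qed.

Lemma Gmull p q r (C : 'M[R]_(p, q)) (A : R -> 'M[R]_(q, r)) :
  (forall i j, G K w (fun t => A t i j)) ->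
  forall i j, G K w (fun t => (C *m A t) i j).
Proof.
move=> hA i j.
have -> : (fun t => (C *m A t) i j) = (fun t => \sum_k C i k * A t k j).
  by apply/funext => t; rewrite mxE.
by apply: Gsum => // k; apply: GZ => //.
Qed.

Lemma Qint p q r s (A : R -> 'M[R]_(p, q)) (M : 'M[R]_(p, r))
  (B : R -> 'M[R]_(r, s)) :
  (forall i j, G K w (fun t => A t i j)) ->
  (forall i j, G K w (fun t => B t i j)) ->
  forall i j, (@lebesgue_measure R).-integrable K
    (fun t => (w t * ((A t)^T *m M *m B t) i j)%:E).
Proof.
move=> hA hB i j.
have -> : (fun t => (w t * ((A t)^T *m M *m B t) i j)%:E) =
  (fun t => (\sum_l \sum_k (M k l * (w t * (A t k i * B t l j))))%:E).
  apply/funext => t; congr EFin; rewrite mxE mulr_sumr; apply: eq_bigr => l _.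
  rewrite mxE mulr_suml mulr_sumr; apply: eq_bigr => k _; rewrite !mxE; ring.
apply: int_sum => // l; apply: int_sum => // k; apply: intZ => //.
exact: Gprod.
Qed.

Lemma quad p q (a : 'rV[R]_p) (M : R -> 'M[R]_(p, q)) (b : 'cV[R]_q) :
  (forall i j, (@lebesgue_measure R).-integrable K
     (fun t => (w t * M t i j)%:E)) ->
  (a *m mxint K w M *m b) 0 0 =
    Rintegral (@lebesgue_measure R) K (fun t => w t * (a *m M t *m b) 0 0) /\
  (@lebesgue_measure R).-integrable K (fun t => (w t * (a *m M t *m b) 0 0)%:E).
Proof.
move=> hM.
have E : (fun t => w t * (a *m M t *m b) 0 0) =
  (fun t => \sum_l \sum_k (a 0 k * b l 0) * (w t * M t k l)).
  apply/funext => t; rewrite mxE mulr_sumr; apply: eq_bigr => l _.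
  rewrite mxE mulr_suml mulr_sumr; apply: eq_bigr => k _; ring.
have E' : (fun t => (w t * (a *m M t *m b) 0 0)%:E) =
  (fun t => (\sum_l \sum_k (a 0 k * b l 0) * (w t * M t k l))%:E).
  by apply/funext => t; have /= -> := congr1 (fun F => F t) E.
rewrite E E'; split; last first.
  apply: int_sum => // l; apply: int_sum => // k; exact: intZ.
rewrite Rint_sum //; last first.
  move=> l; apply: int_sum => // k; exact: intZ.
rewrite mxE; apply: eq_bigr => l _.
rewrite Rint_sum //; last by move=> k; exact: intZ.
rewrite mxE mulr_suml; apply: eq_bigr => k _.
rewrite RintegralZl //; last exact: hM.
rewrite !mxE; ring.
Qed.

Lemma L2wG m (x : R -> 'cV[R]_m) : L2w K w x ->
  forall i j, G K w (fun t => x t i j).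
Proof.
move=> [mx ix] i j; rewrite (ord1 j).
have mS : @measurable_fun _ _ (measurableTypeR R) R K
    (fun t => w t * ((x t)^T *m x t) 0 0).
  have -> : (fun t => w t * ((x t)^T *m x t) 0 0) =
     (fun t => w t * \sum_k (x t k 0 * x t k 0)).
    by apply/funext => t; rewrite mxE; congr (_ * _); apply: eq_bigr => k _; rewrite mxE.
  apply: measurable_funM; first by case/integrableP: wi => /measurable_EFinP.
  apply: measurable_sum => k; apply: measurable_funM; exact: mx.
have iS : (@lebesgue_measure R).-integrable K
    (fun t => (w t * ((x t)^T *m x t) 0 0)%:E).
  apply/integrableP; split; first exact/measurable_EFinP.
  apply: le_lt_trans ix; rewrite le_eqVlt; apply/orP; left; apply/eqP.
  apply: eq_integral => t; rewrite inE => Kt.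
  rewrite gee0_abs // lee_fin mulr_ge0 //; first exact: w0.
  rewrite mxE; apply: sumr_ge0 => k _; rewrite mxE; by rewrite -expr2 sqr_ge0.
split; first exact: mx.
apply: (@le_integrable _ _ _ _ _ mK _ _ _ _ iS).
  apply/measurable_EFinP; apply: measurable_funM.
    by case/integrableP: wi => /measurable_EFinP.
  by apply: measurable_funX; exact: mx.
move=> t Kt /=; rewrite lee_fin.
have wt := w0 t Kt.
have hs : x t i 0 ^+ 2 <= ((x t)^T *m x t) 0 0.
  rewrite mxE (bigD1 i) //= mxE -expr2 lerDl; apply: sumr_ge0 => k _.
  rewrite mxE; by rewrite -expr2 sqr_ge0.
rewrite !ger0_norm //; first by rewrite ler_wpM2l.
  by rewrite mulr_ge0 // (le_trans _ hs) // sqr_ge0.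
by rewrite mulr_ge0 // sqr_ge0.
Qed.

End GM.
Lemma eD (V : nmodType) m n (A B : 'M[V]_(m, n)) i j : (A + B) i j = A i j + B i j.
Proof. by rewrite mxE. Qed.
Lemma eN (V : zmodType) m n (A : 'M[V]_(m, n)) i j : (- A) i j = - A i j.
Proof. by rewrite mxE. Qed.
Lemma eT (V : Type) m n (A : 'M[V]_(m, n)) i j : A^T j i = A i j.
Proof. by rewrite mxE. Qed.
Lemma eZ (V : pzRingType) m n c (A : 'M[V]_(m, n)) i j : (c *: A) i j = c * A i j.
Proof. by rewrite mxE. Qed.

Section Mx.
Context (R : realType).


Lemma kronIE m (v : 'cV[R]_m) k i j :
  kronI v k i j = v (mxtens_unindex i).1 0 * ((mxtens_unindex i).2 == j)%:R.
Proof.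
rewrite /kronI castmxE mxE cast_ord_id.
have -> : (mxtens_unindex (cast_ord (esym (mul1n k)) j)).1 = 0 by rewrite ord1.
have -> : (mxtens_unindex (cast_ord (esym (mul1n k)) j)).2 = j.
  by apply/val_inj => /=; rewrite modn_small.
by rewrite mxE.
Qed.

Lemma kron_mul m (v : 'cV[R]_m) k (z : 'cV[R]_k) i j :
  (kronI v k *m z) (mxtens_index (i, j)) 0 = v i 0 * z j 0.
Proof.
rewrite mxE (bigD1 j) //= kronIE mxtens_indexK /= eqxx mulr1 big1 ?addr0 //.
by move=> b /negbTE hb; rewrite kronIE mxtens_indexK /= eq_sym hb mulr0 mul0r.
Qed.

Lemma sum_tens (m n : nat) (F : 'I_(m * n) -> R) :
  \sum_k F k = \sum_(i < m) \sum_(j < n) F (mxtens_index (i, j)).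
Proof.
rewrite pair_big /= (reindex (@mxtens_index m n)) /=.
  by apply: eq_bigr => -[i j] _.
by exists (@mxtens_unindex m n) => x _; [apply: mxtens_indexK | apply: mxtens_unindexK].
Qed.

Lemma key d n q (v : 'cV[R]_d) (x : 'cV[R]_n) (z : 'cV[R]_q)
  (X : 'M[R]_(n, d * q)) :
  (x^T *m X *m (kronI v q *m z)) 0 0 =
  ((kronI v n *m x)^T *m (Xhat X *m z)) 0 0.
Proof.
rewrite !mxE !sum_tens; apply: eq_bigr => i _.
idtac.
under eq_bigr => j _ do rewrite kron_mul mxE mulr_suml.
rewrite exchange_big /=; apply: eq_bigr => c _.
rewrite !eT kron_mul mxE mulr_sumr; apply: eq_bigr => j _.
rewrite /Xhat mxE mxtens_indexK /= /Xblk mxE; ring.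
Qed.

Lemma blockineq n p (U : 'M[R]_n) (X : 'M[R]_(n, p)) (Y : 'M[R]_p)
  (a : 'cV[R]_n) (b : 'cV[R]_p) :
  psd (block_mx U (- X) (- X^T) Y) ->
  2 * (a^T *m X *m b) 0 0 - (b^T *m Y *m b) 0 0 <= (a^T *m U *m a) 0 0.
Proof.
case=> _ /(_ (col_mx a b)).
have -> : (col_mx a b)^T *m block_mx U (- X) (- X^T) Y *m col_mx a b =
   a^T *m U *m a - (a^T *m X *m b)^T - a^T *m X *m b + b^T *m Y *m b.
  rewrite tr_col_mx mul_row_block mul_row_col !mulmxDl !mulmxN !mulNmx.
  by rewrite !trmx_mul trmxK !mulmxA !addrA.
set s1 := a^T *m U *m a; set s2 := a^T *m X *m b; set s4 := b^T *m Y *m b.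
by rewrite !eD !eN eT; lra.
Qed.

End Mx.
Arguments L2wG {R K w} _ _ _ {m x}.
Arguments Gmulr {R K w}.
Arguments Qint {R K w}.
Arguments quad {R K w} _ {p q}.
Arguments blockineq {R n p U X Y}.

Theorem theorem2 (R : realType) (K : set R) (w : R -> R) (d n rho : nat)
  (f : R -> 'cV[R]_d) (U : 'M[R]_n)
  (Y : 'M[R]_(d * (rho * n))) (X : 'M[R]_(n, d * (rho * n))) :
  measurable K ->
  (@lebesgue_measure R K != 0)%E ->
  (forall t, K t -> 0 <= w t) ->
  (@lebesgue_measure R).-integrable K (fun t => (w t)%:E) ->
  countable (K `&` [set t | w t = 0]) ->
  L2w K w f ->
  pd (mxint K w (fun t => f t *m (f t)^T)) ->
  psd U ->
  Y^T = Y ->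
  psd (block_mx U (- X) (- X^T) Y) ->
  let W := mxint K w (fun t => (kronI (f t) (rho * n))^T *m Y
                                 *m kronI (f t) (rho * n)) in
  let F := fun t => kronI (f t) n in
  (forall (z : 'cV[R]_(rho * n)) (x : R -> 'cV[R]_n),
     L2w K w x ->
     let theta := mxint K w (fun t => F t *m x t) in
     Rintegral (@lebesgue_measure R) K
       (fun t => w t * ((x t)^T *m U *m x t) 0 0)
     >= (2%:R *: (theta^T *m Xhat X *m z) - z^T *m W *m z) 0 0) /\
  (forall (Ups : 'M[R]_(d * n, rho * n)) (z : 'cV[R]_(rho * n))
          (x : R -> 'cV[R]_n),
     L2w K w x ->
     Ups *m z = mxint K w (fun t => F t *m x t) ->
     Rintegral (@lebesgue_measure R) K
       (fun t => w t * ((x t)^T *m U *m x t) 0 0)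
     >= (z^T *m (Ups^T *m Xhat X + (Xhat X)^T *m Ups - W) *m z) 0 0).
Proof.
move=> mK0 _ w0 wi _ Lf _ psdU _ psdB W F.
have mK : @measurable _ (measurableTypeR R) K := mK0.
have Gf := L2wG mK w0 wi Lf.
have GKr : forall k i j, G K w (fun t => kronI (f t) k i j).
  move=> k i j.
  have -> : (fun t => kronI (f t) k i j) =
      (fun t => ((mxtens_unindex i).2 == j)%:R * f t (mxtens_unindex i).1 0).
    by apply/funext => t; rewrite kronIE mulrC.
  exact: GZ.
have P1 : forall (z : 'cV[R]_(rho * n)) (x : R -> 'cV[R]_n),
     L2w K w x ->
     let theta := mxint K w (fun t => F t *m x t) in
     Rintegral (@lebesgue_measure R) K
       (fun t => w t * ((x t)^T *m U *m x t) 0 0)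
     >= (2%:R *: (theta^T *m Xhat X *m z) - z^T *m W *m z) 0 0.
  move=> z x Lx /=; set theta := mxint K w (fun t => F t *m x t).
  have Gx := L2wG mK w0 wi Lx.
  have GKz : forall i j, G K w (fun t => (kronI (f t) (rho * n) *m z) i j).
    exact: (Gmulr mK w0 wi _ _ _ _ z (GKr (rho * n))).
  have eth : theta^T *m Xhat X *m z =
      1%:M *m mxint K w (fun t => (F t *m x t)^T) *m (Xhat X *m z).
    have -> : theta^T = mxint K w (fun t => (F t *m x t)^T).
      apply/matrixP => i j; rewrite /theta !mxE.
      by apply: eq_Rintegral => t _; rewrite eT.
    by rewrite mul1mx -mulmxA.
  have iFx : forall i j, (@lebesgue_measure R).-integrable K
       (fun t => (w t * ((F t *m x t)^T) i j)%:E).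
    move=> i j.
    have -> : (fun t => (w t * ((F t *m x t)^T) i j)%:E) =
       (fun t => (w t * (((F t)^T)^T *m 1%:M *m x t) j i)%:E).
      by apply/funext => t; rewrite eT trmxK mulmx1.
    apply: (Qint mK w0 wi) => // i' j'; rewrite /F.
    under eq_fun do rewrite eT.
    exact: GKr.
  have [E1 I1] := quad mK (1%:M : 'rV[R]_1) _ (Xhat X *m z) iFx.
  have iW : forall i j, (@lebesgue_measure R).-integrable K
       (fun t => (w t * ((kronI (f t) (rho * n))^T *m Y
                                 *m kronI (f t) (rho * n)) i j)%:E).
    by apply: (Qint mK w0 wi) => //; exact: GKr.
  have [E2 I2] := quad mK z^T _ z iW.
  rewrite eD eN eZ eth E1 /W E2.
  rewrite -RintegralZl // -RintegralB //; last exact: intZ.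
  apply: le_Rintegral => //.
  - apply: intD => //; [exact: intZ | ].
    by have := integrableN I2; apply: eq_integrable => // t _ /=.
  - exact: (Qint mK w0 wi).
  move=> t Kt.
  have wt := w0 t Kt.
  have := blockineq (x t) (kronI (f t) (rho * n) *m z) psdB.
  rewrite mul1mx key -/(F t) => H.
  have -> : (z^T *m ((kronI (f t) (rho * n))^T *m Y *m kronI (f t) (rho * n)) *m z)
     = (kronI (f t) (rho * n) *m z)^T *m Y *m (kronI (f t) (rho * n) *m z).
    by rewrite trmx_mul !mulmxA.
  rewrite mulrA (mulrC 2) -mulrA -mulrBr.
  exact: ler_wpM2l.
split; first exact: P1.
move=> Ups z x Lx HU.
have H := P1 z x Lx; simpl in H.
set theta := mxint K w (fun t => F t *m x t) in H HU.
have e1 : z^T *m (Ups^T *m Xhat X + (Xhat X)^T *m Ups - W) *m z =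
   theta^T *m Xhat X *m z + (theta^T *m Xhat X *m z)^T - z^T *m W *m z.
  rewrite -HU !mulmxDr !mulmxDl mulmxN mulNmx !trmx_mul !trmxK !mulmxA.
  by [].
move: H; rewrite e1 !eD !eN eZ eT.
lra.
Qed.
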